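(* Let $d\ge2$ be an integer, let $C>1$, let $K$ be a compact subset of $\mathbb{C}^*$ and let $L$ be a compact subset of the set of monic polynomials of degree $d$. There exists a constant $A>0$ such that, if $b\in\mathbb{C}$ satisfies $|b|>A$, then for every $N\ge1$ and all $\alpha_1,\ldots,\alpha_N\in K$ and $P_1,\ldots,P_N\in L$, the map $f:=f_N\circ\cdots\circ f_1$, where $f_i(z):=P_i(z)-b\alpha_i$, is hyperbolic with an expanding constant larger than $C$.
   Context: The set of monic degree $d$ polynomials is identified with $\mathbb{C}^d$ via coefficients. A polynomial $f$ is hyperbolic with expanding constant larger than $C$ if it is uniformly expanding on its Julia set with expansion factor larger than $C$ (i.e. $|f'|>C$ on the Julia set of $f$). *)

(* Defs.v *)
From HB Require Import structures.
From mathcomp Require Import all_boot all_order all_algebra.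
From mathcomp Require Import complex.
From mathcomp Require Import all_classical all_reals all_analysis.
Set Implicit Arguments. Unset Strict Implicit. Unset Printing Implicit Defensive.
Import Order.TTheory GRing.Theory Num.Theory.
Import numFieldTopology.Exports numFieldNormedType.Exports.
Local Open Scope classical_set_scope.
Local Open Scope ring_scope.
Local Open Scope complex_scope.

(* The complex numbers are modelled as R[i] for a real field R : realType,
   with the topology induced by the modulus (norm); the topology is carried
   by the alias R[i]^o (definitionally equal to R[i]). *)

(* Monic polynomial of degree d with lower coefficients c_0 .. c_{d-1}:
   X^d + sum_{i<d} c_i X^i.  This is the identification of monic degree-d
   polynomials with C^d via coefficients. *)
Definition monic_of (R : realType) (d : nat) (c : 'rV[R[i]^o]_d) : {poly R[i]} :=
  'X^d + \sum_(j < d) (c ord0 j)%:P * 'X^j.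

Fixpoint comp_seq (R : realType) (N : nat) (f : nat -> {poly R[i]}) : {poly R[i]} :=
  match N with
  | 0 => 'X
  | n.+1 => f n.+1 \Po comp_seq n f
  end.

Definition filled_julia (R : realType) (p : {poly R[i]}) : set R[i] :=
  [set z | exists M : R, forall n : nat, `|iter n (horner p) z| <= M%:C].

Definition julia (R : realType) (p : {poly R[i]}) : set R[i] :=
  @closure R[i]^o (filled_julia p) `&` @closure R[i]^o (~` filled_julia p).

Definition hyperbolic_gt (R : realType) (C : R) (p : {poly R[i]}) : Prop :=
  forall z, julia p z -> C%:C < `|p^`().[z]|.

(* Main.v *)
Require Import Defs.
From HB Require Import structures.
From mathcomp Require Import all_boot all_order all_algebra.
From mathcomp Require Import complex.
From mathcomp Require Import all_classical all_reals all_analysis.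
From mathcomp Require Import ring lra.
Import Order.TTheory GRing.Theory Num.Theory.
Import numFieldTopology.Exports numFieldNormedType.Exports.
Local Open Scope classical_set_scope.
Local Open Scope ring_scope.
Local Open Scope complex_scope.
Set Implicit Arguments. Unset Strict Implicit.
Section S.
Variable R : realType.
Definition nc (x : R[i]) : R := complex.Re `|x|.
Lemma normE (x : R[i]) : `|x| = (nc x)%:C.
Proof. by rewrite /nc normc_def. Qed.
Lemma nc_ge0 x : 0 <= nc x.
Proof. by rewrite -ler0c -normE. Qed.
Lemma ncM x y : nc (x * y) = nc x * nc y.
Proof. by apply: complexI; rewrite rmorphM /= -!normE normrM. Qed.
Lemma ncX x n : nc (x ^+ n) = nc x ^+ n.
Proof. by apply: complexI; rewrite rmorphXn /= -!normE normrX. Qed.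
Lemma nc0 : nc 0 = 0.
Proof. by apply: complexI; rewrite -normE normr0. Qed.
Lemma nc1 : nc 1 = 1.
Proof. by apply: complexI; rewrite -!normE normr1. Qed.
Lemma ncN x : nc (- x) = nc x.
Proof. by apply: complexI; rewrite -!normE normrN. Qed.
Lemma ncMn x n : nc (x *+ n) = nc x *+ n.
Proof. by apply: complexI; rewrite rmorphMn /= -!normE normrMn. Qed.
Lemma ncD x y : nc (x + y) <= nc x + nc y.
Proof. by rewrite -lecR rmorphD /= -!normE ler_normD. Qed.
Lemma ncB x y : nc x - nc y <= nc (x + y).
Proof. have := ncD (x + y) (- y); rewrite addrK ncN => h; by rewrite lerBlDr. Qed.
Lemma nc_eq0 x : (nc x == 0) = (x == 0).
Proof. by rewrite -(normr_eq0 x) normE -[0 in RHS]/((0:R)%:C) (inj_eq (@complexI R)). Qed.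
Lemma nc_sum (I : finType) (F : I -> R[i]) : nc (\sum_i F i) <= \sum_i nc (F i).
Proof.
apply: (big_ind2 (fun a b => nc a <= b)) => //.
- by rewrite nc0.
- by move=> a b c e h1 h2; apply: le_trans (ncD _ _) _; exact: lerD.
Qed.
Lemma Re_le (x : R[i]) : `|complex.Re x| <= nc x.
Proof.
rewrite /nc normc_def /=. rewrite -sqrtr_sqr. rewrite ler_sqrt ?addr_ge0 ?sqr_ge0 //.
by rewrite lerDl sqr_ge0.
Qed.
Lemma nc_lip (x y : R[i]) : `|nc x - nc y| <= nc (x - y).
Proof.
have -> : nc x - nc y = complex.Re (`|x| - `|y|) by rewrite raddfB.
apply: le_trans (Re_le _) _.
have := ler_dist_dist x y. rewrite !normE. rewrite lecR. done.
Qed.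
Lemma nc_cont : continuous (nc : R[i]^o -> R).
Proof.
move=> x; apply: (proj2 (@cvgrPdist_lt _ _ _ (nbhs (x : R[i]^o)) _ _ _)) => e e0.
have : nbhs x (ball x (e%:C : R[i]^o)). apply: nbhsx_ballx. by rewrite ltcR.
apply: filterS => y. rewrite /ball /= normE ltcR => h.
exact: le_lt_trans (nc_lip _ _) h.
Qed.
Lemma horner_cont (p : {poly R[i]}) : continuous (fun x : R[i]^o => (p.[x] : R[i]^o)).
Proof.
elim/poly_ind: p => [|p c IH].
  have E : (fun y : R[i]^o => ((0 : {poly R[i]}).[y] : R[i]^o)) = (fun y : R[i]^o => (0 : R[i]^o)).
    by apply: funext => y; rewrite horner0.
  by rewrite E; exact: cst_continuous.
have E : (fun y : R[i]^o => ((p * 'X + c%:P).[y] : R[i]^o)) = (fun y : R[i]^o => (p.[y] * y + c : R[i]^o)).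
  by apply: funext => y; rewrite hornerMXaddC.
rewrite E => x.
apply: (@cvgD (R[i]) (R[i]^o) _ (nbhs x) _ (fun y : R[i]^o => p.[y] * y) (fun _ => c)); last exact: cvg_cst.
apply: (@cvgM (R[i]^o) _ (nbhs x) _ (fun y : R[i]^o => p.[y]) (fun y : R[i]^o => y)); first exact: IH.
exact: cvg_id.
Qed.
End S.

Section Dyn.
Variables (R : realType) (f : nat -> {poly R[i]}) (N : nat) (E : R[i] -> Prop) (rho D : R).
Hypothesis HN : (1 <= N)%N.
Hypothesis HE1 : forall w, E w -> 1 <= nc w.
Hypothesis H1 : forall j w, (1 <= j <= N)%N -> E w -> E (f j).[w] /\ 2 * nc w <= nc (f j).[w].
Hypothesis H2 : forall j w, (1 <= j <= N)%N -> nc w <= rho -> E (f j).[w].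
Hypothesis H3 : forall j w, (1 <= j <= N)%N -> rho < nc w -> D <= nc ((f j)^`()).[w].
Hypothesis HD : 1 <= D.

Lemma hornerF n z : (comp_seq n.+1 f).[z] = (f n.+1).[(comp_seq n f).[z]].
Proof. by rewrite /= horner_comp. Qed.

Lemma escF n w : (n <= N)%N -> E w -> E (comp_seq n f).[w] /\ 2 ^+ n * nc w <= nc (comp_seq n f).[w].
Proof.
move=> + Ew; elim: n => [|n IH] hn.
  by rewrite /= hornerX expr0 mul1r.
have [IH1 IH2] := IH (ltnW hn).
have [h1 h2] := H1 (w := (comp_seq n f).[w]) (j := n.+1) (ltac:(by rewrite hn)) IH1.
rewrite hornerF; split => //.
by apply: le_trans h2; rewrite exprS -mulrA ler_pM2l.
Qed.

Lemma escF1 w : E w -> E (comp_seq N f).[w] /\ 2 * nc w <= nc (comp_seq N f).[w].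
Proof.
move=> Ew; have [h1 h2] := escF (leqnn N) Ew; split => //.
apply: le_trans h2; apply: ler_wpM2r; first exact: nc_ge0.
case: N HN => // n _; rewrite exprS; rewrite ler_peMr //.
by rewrite exprn_ege1 // ler1n.
Qed.

Lemma escIter w : E w -> forall k, E (iter k (horner (comp_seq N f)) w) /\
   2 ^+ k * nc w <= nc (iter k (horner (comp_seq N f)) w).
Proof.
move=> Ew; elim=> [|k [IH1 IH2]]; first by rewrite /= expr0 mul1r.
have [h1 h2] := escF1 IH1.
rewrite iterS; split => //.
by apply: le_trans h2; rewrite exprS -mulrA ler_pM2l.
Qed.

Lemma prefix z n k : (n + k <= N)%N -> E (comp_seq n f).[z] -> E (comp_seq (n + k) f).[z].
Proof.
elim: k => [|k IH] hk Ez; first by rewrite addn0.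
rewrite addnS in hk *; rewrite hornerF.
by apply: (H1 (j := (n + k).+1) _ (IH (ltnW hk) Ez)).1; rewrite hk.
Qed.

Lemma noE z : filled_julia (comp_seq N f) z -> forall n, (n <= N)%N -> ~ E (comp_seq n f).[z].
Proof.
move=> [M hM] n hn En.
have EN : E (comp_seq N f).[z].
  by have := @prefix z n (N - n) (ltac:(by rewrite subnKC)) En; rewrite subnKC.
have M0 : 0 <= M by have := hM 0%N; rewrite normE lecR => /(le_trans (nc_ge0 _)).
set k := Num.Def.archi_bound M.
have [_ h2] := escIter EN k.
have := hM k.+1; rewrite iterSr normE lecR => hk.
have := le_trans h2 hk.
have := HE1 EN => h1.
have : (k%:R : R) <= 2 ^+ k.
  by rewrite -natrX ler_nat ltnW // ltn_expl.
have := archi_boundP M0; rewrite -/k => a b c.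
have : 2 ^+ k <= 2 ^+ k * nc (comp_seq N f).[z].
  by rewrite ler_peMr // exprn_ge0.
move=> d; have := le_trans d c; have := lt_le_trans a b.
by move=> x y; have := lt_le_trans x y; rewrite ltxx.
Qed.

Lemma bigRho z : filled_julia (comp_seq N f) z -> forall n, (n < N)%N -> rho < nc (comp_seq n f).[z].
Proof.
move=> Fz n hn; rewrite ltNge; apply/negP => h.
apply: (noE Fz hn); rewrite hornerF; apply: H2 h.
by rewrite hn.
Qed.

Lemma derivF z : filled_julia (comp_seq N f) z -> forall n, (n <= N)%N ->
  D ^+ n <= nc ((comp_seq n f)^`()).[z].
Proof.
move=> Fz; elim=> [|n IH] hn.
  by rewrite /= derivX hornerC expr0 nc1.
rewrite /= deriv_comp hornerM horner_comp ncM exprS.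
apply: ler_pM => //; first by apply: le_trans HD.
  exact: exprn_ge0 (le_trans ler01 HD).
  apply: H3; first by rewrite hn.
  exact: bigRho.
exact: IH (ltnW hn).
Qed.

Lemma dyn_main z : filled_julia (comp_seq N f) z -> D <= nc ((comp_seq N f)^`()).[z].
Proof.
move=> Fz; apply: le_trans (derivF Fz (leqnn N)).
case: N HN => // n _; rewrite exprS ler_peMr //; first exact: le_trans HD.
exact: exprn_ege1.
Qed.
End Dyn.
Section Poly.
Variables (R : realType) (d : nat).
Implicit Types (cf : 'rV[R[i]^o]_d) (w : R[i]).

Lemma horner_monic cf w : (monic_of cf).[w] = w ^+ d + \sum_(j < d) cf ord0 j * w ^+ j.
Proof.
rewrite /monic_of hornerD hornerXn horner_sum; congr (_ + _).
by apply: eq_bigr => j _; rewrite hornerCM hornerXn.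
Qed.

Lemma deriv_monic cf w : ((monic_of cf)^`()).[w] =
  w ^+ d.-1 *+ d + \sum_(j < d) cf ord0 j * (w ^+ j.-1 *+ j).
Proof.
rewrite /monic_of derivD derivXn raddf_sum hornerD hornerMn hornerXn horner_sum.
congr (_ + _); apply: eq_bigr => j _.
by rewrite mul_polyC /= derivZ derivXn hornerZ hornerMn hornerXn.
Qed.

Lemma sum_bound cf w (c r : R) : 0 <= c -> 1 <= r -> nc w <= r ->
  (forall j, nc (cf ord0 j) <= c) ->
  nc (\sum_(j < d) cf ord0 j * w ^+ j) <= d%:R * c * r ^+ d.-1.
Proof.
move=> c0 r1 wr hc; apply: le_trans (nc_sum _) _.
have -> : d%:R * c * r ^+ d.-1 = \sum_(j < d) (c * r ^+ d.-1).
  by rewrite sumr_const card_ord mulr_natl mulrnAl.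
apply: ler_sum => j _; rewrite ncM ncX; apply: ler_pM => //; first exact: nc_ge0.
  exact: exprn_ge0 (nc_ge0 _).
apply: le_trans (_ : r ^+ j <= _).
  by rewrite lerXn2r // ?nnegrE ?nc_ge0 // (le_trans ler01).
apply: ler_weXn2l => //; rewrite -ltnS prednK //; exact: leq_ltn_trans (leq0n j) (ltn_ord j).
Qed.

Lemma dsum_bound cf w (c r : R) : 0 <= c -> 1 <= r -> nc w <= r ->
  (forall j, nc (cf ord0 j) <= c) ->
  nc (\sum_(j < d) cf ord0 j * (w ^+ j.-1 *+ j)) <= d%:R * (d%:R * c * r ^+ d.-2).
Proof.
move=> c0 r1 wr hc; apply: le_trans (nc_sum _) _.
have -> : d%:R * (d%:R * c * r ^+ d.-2) = \sum_(j < d) (d%:R * c * r ^+ d.-2).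
  by rewrite sumr_const card_ord mulr_natl.
apply: ler_sum => j _; rewrite ncM ncMn ncX.
apply: le_trans (_ : c * (r ^+ d.-2 * d%:R) <= _); last first.
  by rewrite le_eqVlt; apply/orP; left; apply/eqP; ring.
apply: ler_pM => //; first exact: nc_ge0.
  by rewrite mulrn_wge0 ?exprn_ge0 ?nc_ge0.
rewrite -[_ *+ j]mulr_natr; apply: ler_pM => //; first by rewrite exprn_ge0 ?nc_ge0.
  apply: le_trans (_ : r ^+ j.-1 <= _).
    by rewrite lerXn2r // ?nnegrE ?nc_ge0 // (le_trans ler01).
  apply: ler_weXn2l => //; case: j => [[|j]] //= hj.
  by case: d hj => [|[|dd]] //= hj; rewrite -ltnS.
by rewrite ler_nat ltnW.
Qed.
End Poly.
Section Est.
Variables (R : realType) (n : nat) (C c B m Ma : R) (b a : R[i]) (cf : 'rV[R[i]^o]_n.+2).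
Hypothesis C1 : 1 < C.
Hypothesis c1 : 1 <= c.
Hypothesis hc : forall j, nc (cf ord0 j) <= c.
Hypothesis hB : nc b = B.
Hypothesis m0 : 0 < m.
Hypothesis ham : m <= nc a.
Hypothesis haM : nc a <= Ma.
Let dd : R := n.+2%:R.
Definition rho_ : R := dd * c + 2 * C + 1.
Definition R0_ : R := 2 * dd * c + 8.
Definition E_ (w : R[i]) : Prop := R0_ <= nc w /\ 4 * B * Ma <= nc w ^+ 2.
Definition Q_ : R := rho_ ^+ n.+2 + dd * c * rho_ ^+ n.+1.
Hypothesis hB1 : 2 * Q_ + 2 * R0_ <= B * m.
Hypothesis hB2 : 16 * Ma <= B * m ^+ 2.
Let p := monic_of cf - (b * a)%:P.

Lemma dd2 : 2 <= dd.
Proof. by rewrite /dd ler_nat. Qed.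

Lemma est3 w : rho_ < nc w -> 2 * C <= nc (p^`().[w]).
Proof.
have C1' := C1; have c1' := c1; have m0' := m0; have hB1' := hB1; have hB2' := hB2; have ham' := ham; have haM' := haM.
move=> hw.
rewrite /p derivB derivC subr0 deriv_monic.
have c0 : 0 <= c by apply: le_trans c1.
have x1 : 1 <= nc w.
  have : 0 <= dd * c by rewrite mulr_ge0 // ler0n.
  rewrite /rho_ in hw => h0; lra.
have hS := dsum_bound (cf:=cf) (w:=w) c0 x1 (lexx _) hc.
apply: le_trans (ncB _ _).
rewrite ncMn ncX /= in hS *.
set x := nc w in hw x1 hS *; set S := nc _ in hS *.
have u1 : 1 <= x ^+ n by apply: exprn_ege1.
rewrite exprS.
rewrite -/dd in hS; rewrite -mulr_natr -/dd.
move: hw; rewrite /rho_ => hw.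
set u := x ^+ n in u1 hS *.
have d2 := dd2.
have h1 : 0 <= (dd * u - 1) * (x - dd * c).
  apply: mulr_ge0; last lra.
  nra.
nra.
Qed.

Lemma est1 w : E_ w -> E_ (p.[w]) /\ 2 * nc w <= nc (p.[w]).
Proof.
have C1' := C1; have c1' := c1; have m0' := m0; have hB1' := hB1; have hB2' := hB2; have ham' := ham; have haM' := haM.
move=> [hR hE].
have c0 : 0 <= c by apply: le_trans c1.
have d2 := dd2.
have x1 : 1 <= nc w.
  apply: le_trans hR; rewrite /R0_; nra.
have hS := sum_bound (cf:=cf) (w:=w) c0 x1 (lexx _) hc.
have hba : nc (b * a) <= B * Ma.
  by rewrite ncM hB; apply: ler_wpM2l => //; rewrite -hB nc_ge0.
have hP : nc (w ^+ n.+2) - nc (\sum_(j < n.+2) cf ord0 j * w ^+ j) <= nc ((monic_of cf).[w]).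
  by rewrite horner_monic; apply: ncB.
have hp : nc ((monic_of cf).[w]) - nc (b * a) <= nc p.[w].
  by rewrite /p hornerD hornerN hornerC -(ncN (b * a)); apply: ncB.
rewrite ncX /= -/dd in hS hP.
rewrite /E_ in hE *; rewrite /R0_ in hR *.
set x := nc w in x1 hS hP hE hR *.
set S := nc (\sum_(j < n.+2) _) in hS hP.
set P := nc ((monic_of cf).[w]) in hP hp.
set y := nc p.[w] in hp *.
set BA := nc (b * a) in hba hp.
have u1 : 1 <= x ^+ n by apply: exprn_ege1.
rewrite !exprS in hS hP.
set u := x ^+ n in u1 hS hP.
have h1 : 0 <= (u - 1) * (x * (x - dd * c)).
  apply: mulr_ge0; first lra.
  apply: mulr_ge0; nra.
have h2 : 0 <= x * (x - 2 * dd * c) by apply: mulr_ge0; nra.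
have h3 : 0 <= x * (x - 8) by apply: mulr_ge0; nra.
have hy : 2 * x <= y by nra.
split; last exact: hy.
split; first nra.
have y0 : 0 <= y by nra.
nra.
Qed.

Lemma est2 w : nc w <= rho_ -> E_ (p.[w]).
Proof.
have C1' := C1; have c1' := c1; have m0' := m0; have hB1' := hB1; have hB2' := hB2; have ham' := ham; have haM' := haM.
move=> hw.
have c0 : 0 <= c by apply: le_trans c1.
have d2 := dd2.
have r1 : 1 <= rho_ by rewrite /rho_; nra.
have hS := sum_bound (cf:=cf) (w:=w) c0 r1 hw hc.
have hP : nc ((monic_of cf).[w]) <= Q_.
  rewrite horner_monic; apply: le_trans (ncD _ _) _; rewrite /Q_ -/dd; apply: lerD => //.
  by rewrite ncX lerXn2r // ?nnegrE ?nc_ge0 // (le_trans ler01).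
have hba : B * m <= nc (b * a).
  by rewrite ncM hB; apply: ler_wpM2l => //; rewrite -hB nc_ge0.
have hp : nc (b * a) - nc ((monic_of cf).[w]) <= nc p.[w].
  by rewrite /p hornerD hornerN hornerC -(ncN (b * a)) [(monic_of cf).[w] + _]addrC; apply: ncB.
have B0 : 0 <= B by rewrite -hB nc_ge0.
have Q0 : 0 <= Q_ by apply: le_trans (nc_ge0 _) hP.
have R00 : 0 <= R0_ by rewrite /R0_; nra.
rewrite /E_.
set y := nc p.[w] in hp *.
have hy : B * m - Q_ <= y by lra.
split; first lra.
have hy2 : B * m / 2 <= y by lra.
have h1 : 0 <= (y - B * m / 2) * (y + B * m / 2).
  apply: mulr_ge0; first lra.
  have : 0 <= B * m by apply: mulr_ge0 => //; apply: ltW.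
  lra.
have h2 : 0 <= B * (B * m ^+ 2 - 16 * Ma) by apply: mulr_ge0 => //; lra.
nra.
Qed.
End Est.

Theorem lemma2p2 (R : realType) (d : nat) (C : R)
    (K : set R[i]^o) (L : set 'rV[R[i]^o]_d) :
  (2 <= d)%N -> 1 < C ->
  compact K -> K `<=` [set z | z != 0] -> compact L ->
  exists A : R, 0 < A /\
    forall b : R[i], A%:C < `|b| ->
    forall (N : nat) (alpha : nat -> R[i]) (P : nat -> 'rV[R[i]^o]_d),
      (1 <= N)%N ->
      (forall j, (1 <= j <= N)%N -> K (alpha j) /\ L (P j)) ->
      hyperbolic_gt C
        (comp_seq N (fun j => monic_of (P j) - (b * alpha j)%:P)).
Proof.
move: L; case: d => [|[|n]] L //= _ C1 cK K0 cL.
have [Kn|Kn] := pselect (K !=set0); last first.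
  exists 1; split => // b _ N al P N1 h; exfalso; apply: Kn.
  by exists (al 1%N); apply: (h 1%N _).1; rewrite N1.
have [Ln|Ln] := pselect (L !=set0); last first.
  exists 1; split => // b _ N al P N1 h; exfalso; apply: Ln.
  by exists (P 1%N); apply: (h 1%N _).2; rewrite N1.
have ncK : {within K, continuous (@nc R : R[i]^o -> R)}.
  exact: continuous_subspaceT (@nc_cont R).
have [a0 a0K hmin] := compact_EVT_min Kn cK ncK.
have [a1 a1K hmax] := compact_EVT_max Kn cK ncK.
set m := nc a0; set Ma := nc a1.
have m0 : 0 < m.
  rewrite lt_def nc_ge0 andbT nc_eq0; apply: K0.
  by move: a0K; rewrite inE.
have hj : forall j : 'I_n.+2, exists cj : R, forall Q, L Q -> nc (Q ord0 j) <= cj.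
  move=> j.
  have cg : {within L, continuous (fun Q : 'rV[R[i]^o]_n.+2 => nc (Q ord0 j))}.
    apply: continuous_subspaceT => Q.
    apply: (continuous_comp (f := fun Q : 'rV[R[i]^o]_n.+2 => Q ord0 j) (g := (@nc R : R[i]^o -> R))).
      exact: coord_continuous.
    exact: nc_cont.
  have [Q0 _ hQ] := compact_EVT_max Ln cL cg.
  by exists (nc (Q0 ord0 j)) => Q LQ; apply: hQ; rewrite inE.
have [cj hcj] := boolp.choice hj.
set c := 1 + \sum_(j < n.+2) `|cj j|.
have c1 : 1 <= c by rewrite lerDl sumr_ge0.
have hc : forall Q, L Q -> forall j, nc (Q ord0 j) <= c.
  move=> Q LQ j; apply: le_trans (hcj j Q LQ) _.
  apply: le_trans (ler_norm _) _.
  rewrite /c (bigD1 j) //=; have : 0 <= \sum_(i < n.+2 | i != j) `|cj i| by rewrite sumr_ge0.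
  lra.
have mMa : m <= Ma by apply: hmin.
set Q := Q_ n C c; set R0 := R0_ n c; set rho := rho_ n C c.
have rho1 : 1 <= rho.
  rewrite /rho /rho_.
  have : 0 <= (n.+2%:R : R) * c by rewrite mulr_ge0 // (le_trans ler01).
  lra.
have Q0 : 0 <= Q.
  have r0 : 0 <= rho by apply: le_trans rho1.
  by rewrite /Q /Q_ -/rho addr_ge0 ?exprn_ge0 // !mulr_ge0 ?exprn_ge0 // (le_trans ler01).
have R00 : 0 <= R0.
  by rewrite /R0 /R0_ addr_ge0 // mulr_ge0 // ?mulr_ge0 // (le_trans ler01).
set X := (2 * Q + 2 * R0) / m.
set Y := 16 * Ma / m ^+ 2.
have X0 : 0 <= X.
  by rewrite /X divr_ge0 //; [rewrite addr_ge0 // mulr_ge0 | exact: ltW].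
have Y0 : 0 <= Y.
  rewrite /Y divr_ge0 //; last by rewrite exprn_ge0 // ltW.
  by rewrite mulr_ge0 // (le_trans (ltW m0)).
exists (X + Y + 1); split; first lra.
move=> b hb N al P N1 hK.
rewrite normE ltcR in hb.
set B := nc b in hb.
have hB1 : 2 * Q + 2 * R0 <= B * m.
  by rewrite -ler_pdivrMr //; rewrite -/X; lra.
have hB2 : 16 * Ma <= B * m ^+ 2.
  by rewrite -ler_pdivrMr ?exprn_gt0 //; rewrite -/Y; lra.
have ham : forall j, (1 <= j <= N)%N -> m <= nc (al j) /\ nc (al j) <= Ma.
  move=> j hj1; have [Ka _] := hK j hj1.
  by split; [apply: hmin | apply: hmax]; rewrite inE.
set F := comp_seq N _.
have key : forall z, filled_julia F z -> 2 * C <= nc (F^`()).[z].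
  move=> z Fz.
  apply: (dyn_main (E := E_ n c B Ma) (rho := rho) N1) => //.
  - move=> w [hw _]; apply: le_trans hw; rewrite /R0_.
    have : 0 <= 2 * (n.+2%:R : R) * c by rewrite !mulr_ge0 // (le_trans ler01).
    lra.
  - move=> j w hj1 Ew; have [hk1 hk2] := ham j hj1; have [_ Lp] := hK j hj1.
    exact: (est1 C1 c1 (hc _ Lp) (erefl _) m0 hk1 hk2 hB1 hB2 Ew).
  - move=> j w hj1 Ew; have [hk1 hk2] := ham j hj1; have [_ Lp] := hK j hj1.
    exact: (est2 C1 c1 (hc _ Lp) (erefl _) m0 hk1 hk2 hB1 hB2 Ew).
  - move=> j w hj1 Ew; have [hk1 hk2] := ham j hj1; have [_ Lp] := hK j hj1.
    exact: (est3 b C1 c1 (hc _ Lp) m0 hk1 hk2 hB1 hB2 Ew).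
  - lra.
move=> z [Jz _].
have hcont : {for z, continuous (fun w : R[i]^o => nc ((F^`()).[w]))}.
  apply: (continuous_comp (f := fun w : R[i]^o => ((F^`()).[w] : R[i]^o)) (g := (@nc R : R[i]^o -> R))).
    exact: horner_cont.
  exact: nc_cont.
have NB := proj1 (@cvgrPdist_lt _ _ _ (nbhs (z : R[i]^o)) _ _ _) hcont C (lt_trans ltr01 C1).
have [w [Fw hw]] := Jz _ (NB (nbhs_filter _)).
have := key w Fw.
rewrite normE ltcR.
move: hw; rewrite /=.
set u := nc _; set v := nc _.
move=> hw hv.
have := ler_norm (v - u); rewrite distrC => h; lra.
Qed.
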